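(* Let $q=2^m$ with $q\equiv 1\pmod 3$, and let $s=\frac{q^2+q+1}{3}$. Let $c\in\mathbb{F}_{q^2}^*$ satisfy $\mathrm{Tr}_1^m(c^{q+1})=0$. Then \[ f(x)=cx+x^s+c^q x^{qs} \] is a permutation polynomial of $\mathbb{F}_{q^2}$.
   Context: For $y\in\mathbb{F}_{2^m}$, $\mathrm{Tr}_1^m(y)=\sum_{i=0}^{m-1}y^{2^i}$ is the absolute trace; note $c^{q+1}\in\mathbb{F}_q$. A polynomial is a permutation polynomial of a finite field if it induces a bijection of that field. *)

(* Defs.v *)
From HB Require Import structures.
From mathcomp Require Import all_boot all_order all_algebra all_field.
Set Implicit Arguments. Unset Strict Implicit. Unset Printing Implicit Defensive.
Import GRing.Theory.
Local Open Scope ring_scope.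

Definition abs_trace (F : pzRingType) (m : nat) (y : F) : F :=
  \sum_(i < m) y ^+ (2 ^ i).

Definition is_perm_poly (F : finFieldType) (f : F -> F) : Prop := bijective f.

(* Main.v *)
Require Import Defs.
From HB Require Import structures.
From mathcomp Require Import all_boot all_order all_algebra all_field.
From mathcomp Require Import ring zify.
Import GRing.Theory.
Local Open Scope ring_scope.

Lemma frob2 (F : fieldType) (h2 : 2 \in [pchar F]) (a b : F) i :
  (a + b) ^+ (2 ^ i) = a ^+ (2 ^ i) + b ^+ (2 ^ i).
Proof.
elim: i => [|i IH]; first by rewrite !expr1.
rewrite expnS !(mulnC 2%N) !exprM IH sqrrD.
by rewrite (mulrn_pchar h2) addr0.
Qed.

Lemma tele (F : fieldType) (h2 : 2 \in [pchar F]) (y : F) n :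
  \sum_(i < n) (y ^+ 2 + y) ^+ (2 ^ i) = y ^+ (2 ^ n) + y.
Proof.
elim: n => [|n IH]; first by rewrite big_ord0 expr1 addrr_pchar2.
rewrite big_ord_recr /= IH frob2 // -exprM -expnS.
set a := y ^+ (2 ^ n); set b := y ^+ (2 ^ n.+1).
have -> : a + y + (b + a) = (a + a) + (b + y) by ring.
by rewrite addrr_pchar2 // add0r.
Qed.

Theorem proposition2 (m : nat) (F : finFieldType) (c : F) :
  let q := (2 ^ m)%N in
  let s := ((q ^ 2 + q + 1) %/ 3)%N in
  #|F| = (q ^ 2)%N ->
  (q %% 3 = 1)%N ->
  c != 0 ->
  abs_trace m (c ^+ q.+1) = 0 ->
  is_perm_poly (fun x : F => c * x + x ^+ s + c ^+ q * x ^+ (q * s)).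
Proof.
move=> q s hcard hq3 hc htr.
have q1 : (1 < q)%N.
  have := finNzRing_gt1 F; rewrite hcard.
  have : (0 < q)%N by rewrite expn_gt0.
  case: (q) => [|[|n]] //=.
have h2 : 2 \in [pchar F].
  apply: (@card_finPcharP _ 2 (m * 2)) => //.
  by rewrite hcard expnM.
have qq : forall x : F, x ^+ (q * q) = x.
  by move=> x; rewrite mulnn -hcard expf_card.
pose d := (q %/ 3)%N.
have hqd : q = (3 * d + 1)%N by rewrite {1}(divn_eq q 3) hq3 mulnC.
pose k := (d + 1)%N.
have hs : s = (1 + (q - 1) * k)%N.
  rewrite /s.
  have -> : (q ^ 2 + q + 1 = 3 * (1 + (q - 1) * k))%N.
    rewrite /k hqd; nia.
  by rewrite mulKn.
have hk : (3 * k = q + 2)%N by rewrite /k hqd; lia.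
pose f := fun x : F => c * x + x ^+ s + c ^+ q * x ^+ (q * s).
have key : forall x : F, x != 0 -> exists W : F,
   [/\ f x = x * (c + W + c ^+ q * W ^+ 2), W * W ^+ q = 1 &
       (f x) ^+ q = W * f x].
  move=> x hx.
  pose W := x ^+ ((q - 1) * k).
  have hx1 : x ^+ (q * q - 1) = 1.
    apply: (mulIf hx); rewrite mul1r -exprSr.
    have -> : (q * q - 1).+1 = (q * q)%N by nia.
    exact: qq.
  have hW1 : W * W ^+ q = 1.
    rewrite -exprS /W -exprM.
    have -> : ((q - 1) * k * q.+1 = (q * q - 1) * k)%N by nia.
    by rewrite exprM hx1 expr1n.
  have hxq : x ^+ q = x * W ^+ 3.
    rewrite /W -exprM -exprS.
    have -> : (((q - 1) * k * 3).+1 = q + (q * q - 1))%N by nia.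
    by rewrite exprD hx1 mulr1.
  have hxs : x ^+ s = x * W by rewrite hs exprD expr1.
  have hxqs : x ^+ (q * s) = x * W ^+ 2.
    rewrite mulnC exprM hxs exprMn hxq.
    have -> : x * W ^+ 3 * W ^+ q = x * W ^+ 2 * (W * W ^+ q) by ring.
    by rewrite hW1 mulr1.
  have hf : f x = x * (c + W + c ^+ q * W ^+ 2) by rewrite /f hxs hxqs; ring.
  have frobq : forall a b : F, (a + b) ^+ q = a ^+ q + b ^+ q.
    by move=> a b; apply: frob2.
  exists W; split => //.
  rewrite hf exprMn !frobq !exprMn.
  rewrite -(exprM c q q) qq hxq.
  have E : forall V, W * V = 1 -> x * W ^+ 3 * (c ^+ q + V + c * (V * V))
      = W * (x * (c + W + c ^+ q * W ^+ 2)).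
    move=> V hV.
    transitivity (x * (c ^+ q * W ^+ 3 + W ^+ 2 * (W * V) + c * W * (W * V) ^+ 2)).
      ring.
    rewrite hV; ring.
  exact: E.
have keyH : forall x : F, x != 0 -> exists W : F,
   [/\ f x = x * (c + W + c ^+ q * W ^+ 2), c + W + c ^+ q * W ^+ 2 != 0 &
       (f x) ^+ q = W * f x].
  move=> x hx; have [W [hf hW1 hfq]] := key x hx.
  exists W; split => //.
  apply/negP => /eqP hH.
  have hW0 : W != 0 by apply/negP => /eqP W0; move: hW1; rewrite W0 mul0r => /eqP; rewrite eq_sym oner_eq0.
  pose y := c ^+ q * W.
  pose N := c ^+ q.+1.
  have hy : y ^+ 2 + y = N.
    have -> : y ^+ 2 + y = c ^+ q * (c + W + c ^+ q * W ^+ 2) - N.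
      by rewrite /y /N (exprSr c q); ring.
    by rewrite hH mulr0 sub0r (oppr_pchar2 h2).
  have frobq : forall a b : F, (a + b) ^+ q = a ^+ q + b ^+ q.
    by move=> a b; apply: frob2.
  have ht : y ^+ q + y = 0.
    by rewrite -htr /abs_trace -/N -hy (tele _ h2).
  have hyq : y ^+ q = y by move/eqP: ht; rewrite addr_eq0 (oppr_pchar2 h2) => /eqP.
  have hyy : y * y = N.
    rewrite -{1}hyq /y exprMn -(exprM c q q) qq /N (exprSr c q).
    transitivity (c ^+ q * c * (W * W ^+ q)); first ring.
    by rewrite hW1 mulr1.
  have y0 : y = 0.
    by apply: (@addrI _ N); rewrite addr0 -{2}hy -hyy expr2.
  move: y0; rewrite /y => /eqP; rewrite mulf_eq0 expf_eq0 (negbTE hc) (negbTE hW0) andbF.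
  done.
have s0 : (0 < s)%N by rewrite hs.
have qs0 : (0 < q * s)%N by rewrite muln_gt0 s0 andbT ltnW.
have f0 : f 0 = 0.
  by rewrite /f mulr0 !expr0n (gtn_eqF s0) (gtn_eqF qs0) mulr0 !addr0.
have fnz : forall x, x != 0 -> f x != 0.
  move=> x hx; have [W [hf hH _]] := keyH x hx.
  by rewrite hf mulf_neq0.
change (bijective f); apply: injF_bij => x1 x2; rewrite -/(f x1) -/(f x2) => e.
case: (eqVneq x1 0) => [h1|h1]; case: (eqVneq x2 0) => [h2'|h2'].
- by rewrite h1 h2'.
- by move: (fnz x2 h2'); rewrite -e h1 f0 eqxx.
- by move: (fnz x1 h1); rewrite e h2' f0 eqxx.
have [W1 [hf1 hH1 hq1]] := keyH x1 h1.
have [W2 [hf2 hH2 hq2]] := keyH x2 h2'.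
have hW : W1 = W2.
  by apply: (mulIf (fnz x1 h1)); rewrite -hq1 e hq2.
move: e; rewrite hf1 hf2 hW => e.
by apply: (mulIf hH2).
Qed.
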